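(* Let $G$ be a non-cyclic finite group of order $n$ and let $q$ be the smallest prime divisor of $n$. Then $$\psi(G)\leq \frac{(n-1)n}{q}+1<\frac{n^2}{q}.$$
   Context: For a finite group $G$, $\psi(G)=\sum_{g\in G} o(g)$ denotes the sum of the orders of all elements of $G$. *)

(* Defs.v *)
From mathcomp Require Import all_boot all_order all_algebra all_fingroup all_solvable.
Set Implicit Arguments. Unset Strict Implicit. Unset Printing Implicit Defensive.

Definition psi (gT : finGroupType) (G : {set gT}) : nat := \sum_(g in G) #[g]%g.

(* Main.v *)
Require Import Defs.
From mathcomp Require Import all_boot all_order all_algebra all_fingroup all_solvable.
From mathcomp Require Import zify.
Import Order.TTheory GRing.Theory Num.Theory.

Lemma key_nat (gT : finGroupType) (G : {group gT}) :
  ~~ cyclic G -> (pdiv #|G| * psi G <= pdiv #|G| + (#|G| - 1) * #|G|)%N /\ (pdiv #|G| < #|G|)%N.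
Proof.
move=> ncG; set n := #|G|; set q := pdiv n.
have n1 : (1 < n)%N.
  case: (ltnP 1 n) => // h; case/negP: ncG.
  apply: (@dvdn_prime_cyclic _ _ 2) => //.
  have: (0 < n)%N by exact: cardG_gt0.
  move: h; rewrite /n; case: #|G| => [|[|m]] // _ _; exact: dvd1n.
split; last first.
  have n0 : (0 < n)%N by apply: ltnW.
  rewrite ltn_neqAle (pdiv_leq n0) andbT.
  apply/negP => /eqP e; case/negP: ncG; apply: prime_cyclic.
  rewrite -/n -e; exact: pdiv_prime.
have bnd : forall g, g \in G -> g != 1%g -> (q * #[g]%g <= n)%N.
  move=> g gG _.
  have dv : (#[g]%g %| n)%N by exact: order_dvdG.
  have ne : #[g]%g != n.
    apply/eqP => e; case/negP: ncG; apply/cyclicP; exists g.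
    apply/eqP; rewrite eq_sym eqEcard cycle_subG gG /= -/n -e //.
  have k1 : (1 < n %/ #[g]%g)%N.
    have o0 : (0 < #[g]%g)%N by exact: order_gt0.
    have := divnK dv; move: ne; set k := (n %/ #[g]%g)%N => ne e.
    case: k e => [|[|k]] e //=; first by lia.
    by rewrite mul1n in e; rewrite e eqxx in ne.
  have : (q <= n %/ #[g]%g)%N by apply: pdiv_min_dvd => //; exact: dvdn_div.
  move=> h; rewrite -[leqRHS](divnK dv) leq_mul2r h orbT //.
rewrite /psi (bigD1 1%g) ?group1 //= order1 mulnDr muln1 leq_add2l.
rewrite big_distrr /=.
apply: (@leq_trans (\sum_(i in G | i != 1%g) n)).
  by apply: leq_sum => g /andP[gG g1]; apply: bnd.
rewrite sum_nat_const mulnC.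
have -> : #|[pred g in G | g != 1%g]| = (n - 1)%N.
  rewrite /n (cardsD1 1%g G) group1 add1n subn1 /=.
  by apply: eq_card => g; rewrite !inE andbC.
by rewrite mulnC.
Qed.
Local Open Scope ring_scope.

Theorem proposition5 (gT : finGroupType) (G : {group gT}) (n q : nat) :
  ~~ cyclic G -> #|G|%N = n -> q = pdiv n ->
  ((psi G)%:R <= ((n - 1)%N * n)%:R / q%:R + 1 :> rat) /\
  (((n - 1)%N * n)%:R / q%:R + 1 < (n ^ 2)%:R / q%:R :> rat).
Proof.
move=> ncG nE qE; have [h1 h2] := key_nat _ _ ncG; rewrite nE -qE in h1 h2.
have q0 : (0 < q)%N by rewrite qE pdiv_gt0.
have qr : (0 : rat) < q%:R by rewrite ltr0n.
have -> : ((n - 1)%N * n)%:R / q%:R + 1 = (((n - 1) * n + q)%N)%:R / (q%:R : rat).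
  by rewrite natrD mulrDl divff // gt_eqF.
split.
  by rewrite ler_pdivlMr // -natrM ler_nat mulnC addnC.
rewrite ltr_pM2r ?invr_gt0 // ltr_nat.
have : ((n - 1) * n + n = n ^ 2)%N.
  rewrite expnS expn1 -[X in (_ + X)%N]mul1n -mulnDl subnK //; lia.
lia.
Qed.
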